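(* Let $m\ge1$ be an integer and $\delta_1>0$. There is $\delta_2=\delta_2(\delta_1)>0$ such that if $u\in E_0$ satisfies $E(u)\le 2E(Q)-\delta_1$, then $|u(r)|\le\pi-\delta_2$ for all $r\geq 0$.
   Context: $E(u)=\frac12\int_0^\infty\big(u_r^2+\frac{m^2\sin^2 u}{r^2}\big)r\,dr$; $Q(r)=\pi-2\arctan(r^m)$, so $E(Q)=2m$. $E_0=\{u:[0,\infty)\to\mathbb R\;:\;E(u)<2E(Q),\ \lim_{r\to0^+}u(r)=0,\ \lim_{r\to\infty}u(r)=0\}$. *)

(* Defs.v *)
From HB Require Import structures.
From mathcomp Require Import all_boot all_order all_algebra.
From mathcomp Require Import all_classical all_reals all_analysis.
Set Implicit Arguments. Unset Strict Implicit. Unset Printing Implicit Defensive.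
Import Order.TTheory GRing.Theory Num.Theory.
Import numFieldNormedType.Exports.
Local Open Scope classical_set_scope.
Local Open Scope ring_scope.

(* A function u : [0,oo) -> R (represented as R -> R, only values on [0,oo)
   matter) is locally absolutely continuous on (0,oo) with (weak / a.e.)
   derivative ur : ur is locally integrable on (0,oo) and
   u b - u a = \int_a^b ur for all 0 < a <= b. *)
Definition has_loc_deriv {R : realType} (u ur : R -> R) : Prop :=
  (forall a b : R, 0 < a -> a <= b ->
     (lebesgue_measure : measure _ _).-integrable `[a, b] (EFin \o ur)) /\
  (forall a b : R, 0 < a -> a <= b ->
     u b - u a = Rintegral lebesgue_measure `[a, b] ur).

Definition energy {R : realType} (m : nat) (u ur : R -> R) : \bar R :=
  (\int[lebesgue_measure]_(r in `]0%R, +oo[%classic)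
     (((ur r) ^+ 2 + (m%:R) ^+ 2 * (sin (u r)) ^+ 2 / r ^+ 2) * r / 2)%:E)%E.

(* E(Q) = 2m for Q(r) = pi - 2 arctan(r^m). *)
Definition energy_Q {R : realType} (m : nat) : R := 2 * m%:R.

(* u \in E_0 (with u_r its derivative): finite-energy class with
   E(u) < 2 E(Q), u(r) -> 0 as r -> 0+ and as r -> oo.  The value at r = 0
   is the continuous extension, u 0 = 0. *)
Definition in_E0 {R : realType} (m : nat) (u ur : R -> R) : Prop :=
  [/\ has_loc_deriv u ur,
      (energy m u ur < (2 * energy_Q m)%:E)%E,
      u 0 = 0,
      u x @[x --> 0^'+] --> 0
    & u x @[x --> +oo] --> 0].

(* Main.v *)
Require Import Defs.
From HB Require Import structures.
From mathcomp Require Import all_boot all_order all_algebra.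
From mathcomp Require Import all_classical all_reals all_analysis.
From mathcomp Require Import ring lra measurable_realfun.
Import Order.TTheory GRing.Theory Num.Theory.
Import numFieldNormedType.Exports.
Local Open Scope classical_set_scope.
Local Open Scope ring_scope.

Section S.
Variable R : realType.
Local Notation mu := (@lebesgue_measure R).

Lemma sub_int_ge0 (A B : set R) (f : R -> \bar R) :
  (forall x, B x -> (0 <= f x)%E) -> A `<=` B ->
  (\int[mu]_(x in A) f x <= \int[mu]_(x in B) f x)%E.
Proof.
move=> f0 AB.
rewrite [X in (X <= _)%E]ge0_integralE; last by move=> x /AB /f0.
rewrite [X in (_ <= X)%E]ge0_integralE //.
apply: le_ereal_sup => _ [h hf <-]; exists h => //= x.
apply: le_trans (hf x) _; rewrite /patch; case: ifPn => [xA|_].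
  by rewrite ifT //; rewrite inE; apply: AB; rewrite inE in xA.
case: ifPn => [xB|//]. rewrite inE in xB. exact: (f0 x xB).
Qed.

Lemma cos_mvt (p q : R) : exists c, Num.min p q <= c <= Num.max p q /\
  cos q - cos p = - sin c * (q - p).
Proof.
wlog pq : p q / p <= q.
  move=> H; case/orP: (le_total p q) => [pq|qp]; first exact: (H p q pq).
  have [c [c1 c2]] := H q p qp; exists c; split.
    by rewrite minC maxC.
  by rewrite -opprB c2 -mulrN opprB.
have cc : {within `[p, q], continuous (@cos R)}.
  by apply: continuous_subspaceT => x; exact: continuous_cos.
have [c cin ->] := MVT_segment (f := cos) (df := fun x => - sin x) pq
  (fun x _ => is_derive_cos x) cc.
exists c; split => //; move: cin; rewrite in_itv /= => /andP[h1 h2].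
by rewrite (min_idPl pq) (max_idPr pq) h1 h2.
Qed.

Lemma sin_lip (a b : R) : `|sin a - sin b| <= `|a - b|.
Proof.
wlog ab : a b / b <= a.
  move=> H; case/orP: (le_total b a) => [ba|ab]; first exact: H.
  by rewrite distrC [X in _ <= X]distrC; exact: H.
have cc : {within `[b, a], continuous (@sin R)}.
  by apply: continuous_subspaceT => x; exact: continuous_sin.
have [c cin ->] := MVT_segment (f := sin) (df := cos) ab
  (fun x _ => is_derive_sin x) cc.
by rewrite normrM ler_piMl // cos_max.
Qed.

Variables (m : nat) (u ur : R -> R).
Hypothesis hd : has_loc_deriv u ur.

Lemma u_cont a b : 0 < a -> a <= b -> {within `[a, b], continuous u}.
Proof.
move=> a0 ab.
have hc := parameterized_integral_continuous ab (hd.1 a b a0 ab).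
apply: (@subspace_eq_continuous _ _ _ (fun x => u a + parameterized_integral mu a x ur)).
  move=> x; rewrite inE /= in_itv /= => /andP[ax xb].
  by rewrite /parameterized_integral -(hd.2 a x a0 ax) addrC subrK.
move=> x; apply: cvgD; [exact: cvg_cst | exact: hc].
Qed.

Lemma u_unif a b eta : 0 < a -> a <= b -> 0 < eta -> exists d, 0 < d /\
  forall x y, a <= x -> x <= y -> y <= b -> y - x < d -> `|u y - u x| < eta.
Proof.
move=> a0 ab e0.
pose f := ur \_ `[a, b].
have intf : mu.-integrable setT (EFin \o f).
  by rewrite -restrict_EFin; apply/integrable_restrict => //=; rewrite setTI; exact: hd.1.
have [d [d0 hdd]] := integral_normr_continuous intf e0.
exists d; split => // x y ax xy yb yxd.
have a0x : 0 < x by apply: lt_le_trans ax.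
rewrite (hd.2 x y a0x xy).
apply: le_lt_trans (le_normr_Rintegral _ _) _ => //; first exact: hd.1.
have -> : \int[mu]_(t in `[x, y]) `|ur t| = \int[mu]_(t in `[x, y]) `|f t|.
  apply: eq_Rintegral => t; rewrite inE /= in_itv /= => /andP[xt ty].
  by rewrite /f patchE ifT // inE /= in_itv /= (le_trans ax xt) (le_trans ty yb).
apply: hdd => //; have /= -> := lebesgue_measure_itv `[x, y]; case: ifP => _.
  by rewrite -EFinD lte_fin.
by rewrite lte_fin.
Qed.

Lemma m_ur (a b : R) : 0 < a -> a <= b -> measurable_fun `[a, b] ur.
Proof.
by move=> a0 ab; have /integrableP[/measurable_EFinP] := hd.1 a b a0 ab.
Qed.

Lemma m_u (a b : R) : 0 < a -> a <= b -> measurable_fun `[a, b] u.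
Proof.
move=> a0 ab; apply: subspace_continuous_measurable_fun => //.
exact: u_cont.
Qed.

Lemma loc (s t eta : R) : 0 < s -> s <= t -> 0 <= eta ->
  (forall x, s <= x <= t -> `|u x - u s| <= eta /\ `|u x - u t| <= eta) ->
  ((m%:R * `|cos (u t) - cos (u s)|)%:E <=
   \int[mu]_(x in `]s, t]) (m%:R * (`|sin (u x)| + eta) * `|ur x|)%:E)%E.
Proof.
move=> s0 st e0 hu.
have sub : `]s, t] `<=` `[s, t].
  by move=> x; rewrite /= !in_itv /= => /andP[h1 h2]; rewrite (ltW h1) h2.
have intc : mu.-integrable `[s, t] (EFin \o ur) := hd.1 s t s0 st.
have into : mu.-integrable `]s, t] (EFin \o ur).
  exact: integrableS intc.
have intn : mu.-integrable `]s, t] (EFin \o (fun x => `|ur x|)).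
  exact: (integrable_abse into).
have mur' : measurable_fun `]s, t] ur := measurable_funS (measurable_itv _) sub (@m_ur s t s0 st).
have mu' : measurable_fun `]s, t] u := measurable_funS (measurable_itv _) sub (@m_u s t s0 st).
have [c [cmm ->]] := cos_mvt (u s) (u t).
have H1 : `|u t - u s| <= \int[mu]_(x in `]s, t]) `|ur x|.
  rewrite (hd.2 s t s0 st) -(Rintegral_itv_obnd_cbnd into).
  exact: le_normr_Rintegral.
have H2 : ((m%:R * `|sin c| * \int[mu]_(x in `]s, t]) `|ur x|)%:E =
    \int[mu]_(x in `]s, t]) (m%:R * `|sin c| * `|ur x|)%:E)%E.
  rewrite EFinM /Rintegral fineK; last exact: integrable_fin_num intn.
  rewrite -integralZl //.
have H3 : ((m%:R * `|- sin c * (u t - u s)|)%:E <=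
    (m%:R * `|sin c| * \int[mu]_(x in `]s, t]) `|ur x|)%:E)%E.
  rewrite lee_fin normrM normrN -mulrA ler_wpM2l // ler_wpM2l //.
apply: le_trans H3 _; rewrite H2; apply: ge0_le_integral => //.
- apply/measurable_EFinP; apply: measurable_funM => //.
  exact: measurableT_comp.
- apply/measurable_EFinP; apply: measurable_funM => //; last exact: measurableT_comp.
  apply: measurable_funM => //; apply: measurable_funD => //.
  apply: measurableT_comp => //; apply: measurableT_comp => //.
  by apply: continuous_measurable_fun; exact: continuous_sin.
move=> x; rewrite /= in_itv /= => /andP[sx xt].
rewrite lee_fin ler_wpM2r // ler_wpM2l //.
have := hu x; rewrite (ltW sx) xt => /(_ isT) [h1 h2].
have hc : `|c - u x| <= eta.
  move: cmm h1 h2; case/orP: (le_total (u s) (u t)) => ust.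
    rewrite (min_idPl ust) (max_idPr ust) => /andP[c1 c2].
    rewrite !ler_norml => /andP[h11 h12] /andP[h21 h22].
    apply/andP; split; lra.
  rewrite (min_idPr ust) (max_idPl ust) => /andP[c1 c2].
  rewrite !ler_norml => /andP[h11 h12] /andP[h21 h22].
  apply/andP; split; lra.
have := sin_lip c (u x).
have := lerB_dist (sin c) (sin (u x)).
lra.
Qed.

Lemma int_split (f : R -> R) (s t w : R) : s <= t -> t <= w ->
  measurable_fun `]s, w] f -> (forall x, s < x -> 0 <= f x) ->
  (\int[mu]_(x in `]s, w]) (f x)%:E =
   \int[mu]_(x in `]s, t]) (f x)%:E + \int[mu]_(x in `]t, w]) (f x)%:E)%E.
Proof.
move=> st tw mf f0.
have E : `]s, w]%classic = `]s, t]%classic `|` `]t, w]%classic :> set R.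
  by apply: itv_bndbnd_setU; rewrite bnd_simp.
rewrite E ge0_integral_setU //.
- by rewrite -E; exact/measurable_EFinP.
- move=> x; rewrite -E /= in_itv /= => /andP[sx _]; rewrite lee_fin; exact: f0.
- apply/disj_setPS => x [] /=; rewrite !in_itv /= => /andP[_ h1] /andP[h2 _].
  by move: (lt_le_trans h2 h1); rewrite ltxx.
Qed.

Definition gk (eta : R) x := m%:R * (`|sin (u x)| + eta) * `|ur x|.

Lemma m_gk (a b eta : R) : 0 < a -> a <= b -> measurable_fun `[a, b] (gk eta).
Proof.
move=> a0 ab; rewrite /gk.
apply: measurable_funM => //; last exact: measurableT_comp (@m_ur a b a0 ab).
apply: measurable_funM => //; apply: measurable_funD => //.
apply: measurableT_comp => //; apply: measurableT_comp (@m_u a b a0 ab).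
by apply: continuous_measurable_fun; exact: continuous_sin.
Qed.

Lemma ind (a b eta : R) : 0 < a -> a <= b -> 0 < eta ->
  ((m%:R * `|cos (u b) - cos (u a)|)%:E <=
   \int[mu]_(x in `]a, b]) (gk eta x)%:E)%E.
Proof.
move=> a0 ab e0.
have [d [d0 hdd]] := @u_unif a b eta a0 ab e0.
have mg : forall s w, a <= s -> w <= b -> measurable_fun `]s, w] (gk eta).
  move=> s w hs wb; apply: measurable_funS (@m_gk a b eta a0 ab) => //.
  move=> x; rewrite /= !in_itv /= => /andP[h1 h2].
  by rewrite (le_trans hs (ltW h1)) (le_trans h2 wb).
have P : forall n : nat, forall s, a <= s -> s <= b -> b - s <= n%:R * (d / 2) ->
    ((m%:R * `|cos (u b) - cos (u s)|)%:E <=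
     \int[mu]_(x in `]s, b]) (gk eta x)%:E)%E.
  elim=> [|n IH] s hs sb hn.
    have -> : s = b by apply/eqP; rewrite eq_le sb /=; move: hn; rewrite mul0r; lra.
    rewrite subrr normr0 mulr0; apply: integral_ge0 => x _.
    by rewrite lee_fin /gk !mulr_ge0 // addr_ge0 // ltW.
  have s0 : 0 < s by apply: lt_le_trans hs.
  case: (ltP (b - s) d) => hbs.
    apply: loc => //; first exact: ltW.
    move=> x /andP[sx xb]; split.
      by apply: ltW; apply: (hdd s x) => //; lra.
    by rewrite distrC; apply: ltW; apply: (hdd x b) => //; lra.
  pose t := s + d / 2.
  have st : s <= t by rewrite /t; lra.
  have tb : t <= b by rewrite /t; lra.
  have ht : b - t <= n%:R * (d / 2).
    by move: hn; rewrite -natr1 /t; lra.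
  have IHt := IH t (le_trans hs st) tb ht.
  have Lst : ((m%:R * `|cos (u t) - cos (u s)|)%:E <=
      \int[mu]_(x in `]s, t]) (gk eta x)%:E)%E.
    apply: loc => //; first exact: ltW.
    move=> x /andP[sx xt]; split.
      by apply: ltW; apply: (hdd s x) => //; rewrite /t in xt tb; lra.
    by rewrite distrC; apply: ltW; apply: (hdd x t) => //; rewrite /t in xt tb *; lra.
  rewrite (@int_split _ s t b) //; last first.
    by move=> x _; rewrite /gk !mulr_ge0 // addr_ge0 // ltW.
    exact: mg.
  apply: le_trans (leeD Lst IHt); rewrite -EFinD lee_fin -mulrDr ler_wpM2l //.
  have -> : cos (u b) - cos (u s) = (cos (u t) - cos (u s)) + (cos (u b) - cos (u t)).
    by ring.
  exact: ler_normD.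
have h0 : 0 <= (b - a) / (d / 2) by apply: divr_ge0; lra.
have := archi_boundP h0; move: (Num.bound _) => n hn.
apply: (P n a (lexx a) ab).
rewrite -ler_pdivrMr; last lra.
exact: ltW.
Qed.

Definition ee (x : R) := ((ur x) ^+ 2 + (m%:R) ^+ 2 * (sin (u x)) ^+ 2 / x ^+ 2) * x / 2.

Lemma m_e (a b : R) : 0 < a -> a <= b -> measurable_fun `[a, b] ee.
Proof.
move=> a0 ab.
have mi : measurable_fun `[a, b] (@GRing.inv R).
  apply: subspace_continuous_measurable_fun => //; apply: continuous_in_subspaceT => x.
  rewrite inE /= in_itv /= => /andP[ax _]; apply: inv_continuous.
  by rewrite gt_eqF //; exact: lt_le_trans ax.
have -> : ee = fun x => ((ur x) ^+ 2 + (m%:R) ^+ 2 * (sin (u x)) ^+ 2 * (x^-1) ^+ 2) * x / 2.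
  by apply: funext => x; rewrite /ee exprVn.
apply: measurable_funM => //.
apply: measurable_funM => //.
apply: measurable_funD; first exact: measurable_funX (@m_ur a b a0 ab).
apply: measurable_funM; last exact: measurable_funX mi.
apply: measurable_funM => //; apply: measurable_funX.
apply: measurableT_comp (@m_u a b a0 ab).
by apply: continuous_measurable_fun; exact: continuous_sin.
Qed.

Lemma ee_ge0 x : 0 < x -> 0 <= ee x.
Proof.
move=> x0; rewrite /ee; apply: mulr_ge0 => //; apply: mulr_ge0; last exact: ltW.
by apply: addr_ge0; [exact: sqr_ge0 | apply: divr_ge0; [apply: mulr_ge0|]; exact: sqr_ge0].
Qed.

Lemma amgm x : 0 < x -> m%:R * `|sin (u x)| * `|ur x| <= ee x.
Proof.
move=> x0; rewrite /ee.
have y0 : 0 < x^-1 by rewrite invr_gt0.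
have xy : x * x^-1 = 1 by rewrite mulfV // gt_eqF.
rewrite -exprVn.
set p := `|ur x|; set q := m%:R * `|sin (u x)|.
have -> : ur x ^+ 2 = p ^+ 2 by rewrite real_normK // num_real.
have -> : m%:R ^+ 2 * sin (u x) ^+ 2 = q ^+ 2.
  by rewrite /q exprMn real_normK // num_real.
set y := x^-1.
have h := mulr_ge0 (sqr_ge0 (p - q * y)) (ltW x0).
have q0 : 0 <= q by rewrite /q mulr_ge0.
have p0 : 0 <= p by exact: normr_ge0.
have e1 : p * q * (x * y) = p * q by rewrite xy mulr1.
nra.
Qed.

Lemma fin_loc (a b ep : R) : (0 < m)%N -> 0 < a -> a <= b -> 0 < ep ->
  ((m%:R * `|cos (u b) - cos (u a)| - ep)%:E <=
   \int[mu]_(x in `]a, b]) (ee x)%:E)%E.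
Proof.
move=> m0 a0 ab ep0.
have mR : 0 < m%:R :> R by rewrite ltr0n.
have sub : `]a, b] `<=` `[a, b].
  by move=> x; rewrite /= !in_itv /= => /andP[h1 h2]; rewrite (ltW h1) h2.
have intc : mu.-integrable `[a, b] (EFin \o ur) := hd.1 a b a0 ab.
have into : mu.-integrable `]a, b] (EFin \o ur) by exact: integrableS intc.
have intn : mu.-integrable `]a, b] (EFin \o (fun x => `|ur x|)).
  exact: (integrable_abse into).
have mur' : measurable_fun `]a, b] ur := measurable_funS (measurable_itv _) sub (@m_ur a b a0 ab).
have mee : measurable_fun `]a, b] ee := measurable_funS (measurable_itv _) sub (@m_e a b a0 ab).
set C := \int[mu]_(x in `]a, b]) `|ur x|.
have C0 : 0 <= C by apply: Rintegral_ge0.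
pose eta := ep / (m%:R * (C + 1)).
have eta0 : 0 < eta by apply: divr_gt0 => //; apply: mulr_gt0 => //; lra.
have H := @ind a b eta a0 ab eta0.
have H2 : (\int[mu]_(x in `]a, b]) (gk eta x)%:E <=
    \int[mu]_(x in `]a, b]) (ee x)%:E + (m%:R * eta * C)%:E)%E.
  have -> : ((m%:R * eta * C)%:E =
      \int[mu]_(x in `]a, b]) (m%:R * eta * `|ur x|)%:E)%E.
    rewrite EFinM /C /Rintegral fineK; last exact: integrable_fin_num intn.
    by rewrite -integralZl.
  rewrite -ge0_integralD //; last 4 first.
  - move=> x; rewrite /= in_itv /= => /andP[ax _]; rewrite lee_fin.
    by apply: ee_ge0; exact: lt_trans ax.
  - exact/measurable_EFinP.
  - move=> x _; rewrite lee_fin; apply: mulr_ge0 => //; apply: mulr_ge0; [exact: ltW | exact: ltW eta0].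
  - apply/measurable_EFinP; apply: measurable_funM => //; exact: measurableT_comp.
  apply: ge0_le_integral => //.
  - by move=> x _; rewrite lee_fin /gk !mulr_ge0 // addr_ge0 // ltW.
  - apply/measurable_EFinP; exact: (measurable_funS (measurable_itv _) sub (@m_gk a b eta a0 ab)).
  - apply: emeasurable_funD; first exact/measurable_EFinP.
    apply/measurable_EFinP; apply: measurable_funM => //; exact: measurableT_comp.
  move=> x; rewrite /= in_itv /= => /andP[ax _]; rewrite -EFinD lee_fin /gk.
  have := @amgm x (lt_trans a0 ax).
  rewrite mulrDr mulrDl; lra.
have H3 : m%:R * eta * C <= ep.
  have -> : m%:R * eta * C = ep * (C / (C + 1)).
    rewrite /eta; field; apply/andP; split; [lra | exact: lt0r_neq0].
  have : C / (C + 1) <= 1 by rewrite ler_pdivrMr; lra.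
  nra.
rewrite EFinB leeBlDr //; apply: le_trans H _; apply: le_trans H2 _.
by apply: leeD => //; rewrite lee_fin.
Qed.

End S.

Lemma one_cos (R : realType) (x : R) : 1 - cos x <= `|x|.
Proof.
have [c [_ hc]] := @cos_mvt R 0 x.
rewrite cos0 subr0 in hc.
have -> : 1 - cos x = sin c * x by rewrite -opprB hc mulNr opprK.
by rewrite (le_trans (ler_norm _)) // normrM ler_piMl // sin_max.
Qed.

Theorem lemma2p1 (R : realType) (m : nat) (delta1 : R) :
  (1 <= m)%N -> 0 < delta1 ->
  exists delta2 : R, 0 < delta2 /\
    forall u ur : R -> R,
      in_E0 m u ur ->
      (energy m u ur <= (2 * energy_Q m - delta1)%:E)%E ->
      forall r : R, 0 <= r -> `|u r| <= pi - delta2.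
Proof.
move=> m1 d10.
have mR : 0 < m%:R :> R by rewrite ltr0n.
pose k := delta1 / (8 * m%:R).
have k0 : 0 < k by apply: divr_gt0 => //; apply: mulr_gt0.
have mk : m%:R * k = delta1 / 8.
  by rewrite /k; field; rewrite pnatr_eq0 -lt0n m1.
have pi0 := @pi_gt0 R.
pose d2 := Num.min (pi / 2) k.
have d2pi : d2 <= pi / 2 by rewrite /d2 ge_min lexx.
have d2k : d2 <= k by rewrite /d2 ge_min lexx orbT.
have d20 : 0 < d2 by rewrite /d2 lt_min k0 andbT divr_gt0.
exists d2; split => // u ur [hd hE hu0 hc0 hcoo] hle r r0.
rewrite leNgt; apply/negP => hgt.
have pd : 0 < pi - d2 by lra.
have rpos : 0 < r.
  move: r0; rewrite le_eqVlt => /predU1P[r0'|//].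
  by move: hgt; rewrite -r0' hu0 normr0; lra.
pose k1 := Num.min k (pi - d2).
have k10 : 0 < k1 by rewrite /k1 lt_min k0 pd.
have [eps [eps0 epsr heps]] : exists eps, [/\ 0 < eps, eps < r & `|0 - u eps| < k1].
  have Hn : \forall x \near 0^'+, [/\ 0 < x, x < r & `|0 - u x| < k1].
    near=> x; split; near: x; [exact: nbhs_right_gt | exact: nbhs_right_lt |].
    exact: cvgr_dist_lt hc0 _ k10.
  exact: filter_ex Hn.
have [R' [rR hR]] : exists R', r < R' /\ `|0 - u R'| < k.
  have Hn : \forall x \near +oo, r < x /\ `|0 - u x| < k.
    near=> x; split; near: x; [apply: nbhs_pinfty_gt; exact: num_real | exact: cvgr_dist_lt hcoo _ k0].
  exact: filter_ex Hn.
rewrite sub0r normrN in heps; rewrite sub0r normrN in hR.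
have hek : `|u eps| < k by apply: lt_le_trans heps _; rewrite /k1 ge_min lexx.
have hep : `|u eps| < pi - d2 by apply: lt_le_trans heps _; rewrite /k1 ge_min lexx orbT.
have epsr' : eps <= r by exact: ltW.
have cu := @u_cont R u ur hd eps r eps0 epsr'.
have cnu : {within `[eps, r], continuous (fun x => `|u x|)}.
  by move=> x; apply: cvg_norm; exact: cu.
have [r1 r1in hr1] : exists2 r1, r1 \in `[eps, r] & `|u r1| = pi - d2.
  apply: IVT => //; apply/andP; split.
    by rewrite ge_min; apply/orP; left; exact: ltW.
  by rewrite le_max; apply/orP; right; exact: ltW.
move: r1in; rewrite in_itv /= => /andP[er1 r1r].
have r1R : r1 <= R' by apply: ltW; exact: le_lt_trans rR.
have epsR : eps <= R' by exact: le_trans r1R.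
have r10 : 0 < r1 by exact: lt_le_trans er1.
have d80 : 0 < delta1 / 8 by apply: divr_gt0.
have F1 := @fin_loc R m u ur hd eps r1 (delta1 / 8) m1 eps0 er1 d80.
have F2 := @fin_loc R m u ur hd r1 R' (delta1 / 8) m1 r10 r1R d80.
have sub1 : `]eps, R'] `<=` `[eps, R'].
  by move=> x; rewrite /= !in_itv /= => /andP[h1 h2]; rewrite (ltW h1) h2.
have Hsplit := @int_split R (ee R m u ur) eps r1 R' er1 r1R
  (measurable_funS (measurable_itv _) sub1 (@m_e R m u ur hd eps R' eps0 epsR))
  (fun x hx => @ee_ge0 R m u ur x (lt_trans eps0 hx)).
have HE : (\int[lebesgue_measure]_(x in `]eps, R']) (ee R m u ur x)%:E <= energy m u ur)%E.
  apply: sub_int_ge0.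
    by move=> x; rewrite /= in_itv /= andbT => x0; rewrite lee_fin; exact: (@ee_ge0 R m u ur x x0).
  by move=> x; rewrite /= !in_itv /= andbT => /andP[h1 _]; exact: lt_trans h1.
have := le_trans (le_trans (leeD F1 F2) _) (le_trans HE hle).
rewrite -Hsplit lexx => /(_ isT); rewrite -EFinD lee_fin /energy_Q => H.
have cr1 : cos (u r1) = - cos d2.
  by rewrite -cos_norm hr1 cosB cospi sinpi mul0r addr0 mulN1r.
have f1 := @one_cos R (u eps).
have f2 := @one_cos R (u R').
have f3 := @one_cos R d2.
rewrite (gtr0_norm d20) in f3.
have n1 := ler_norm (cos (u eps) - cos (u r1)).
rewrite distrC in n1.
have n2 := ler_norm (cos (u R') - cos (u r1)).
have q : 4 - 4 * k <= `|cos (u r1) - cos (u eps)| + `|cos (u R') - cos (u r1)|.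
  rewrite cr1 in n1 n2 *; lra.
have e4 : m%:R * (4 - 4 * k) = 4 * m%:R - delta1 / 2.
  by rewrite mulrBr mulrCA mk; lra.
have := ler_wpM2l (ltW mR) q.
rewrite e4 mulrDr; lra.
Unshelve. all: by end_near.
Qed.
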